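(* (i) If $\omega$ is a standard Gaussian random variable, then $\mathbb P(|\omega|\ge x)\le \frac{2\exp(-x^2/2)}{\sqrt{2\pi}\,x}$ for all $x>0$. (ii) Let $0\le k<j$ be integers and let $\xi=(\xi_0,\dots,\xi_{2^j-1})$ be a vector of independent standard normal random variables. Let $\xi^*=(\xi^*_1,\dots,\xi^*_{2^j})$ be the non-increasing rearrangement of $(|\xi_0|,\dots,|\xi_{2^j-1}|)$. Then for every $K\ge1$, $$\mathbb P\big(\xi^*_{2^k}\ge K\sqrt{j-k}\big)\le\big(2e^{-K^2/2}\big)^{(j-k)2^k}\cdot e^{2^k}.$$ *)

(* Defs.v *)
From HB Require Import structures.
From mathcomp Require Import all_boot all_order all_algebra.
From mathcomp Require Import all_classical all_reals all_analysis.
Set Implicit Arguments. Unset Strict Implicit. Unset Printing Implicit Defensive.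
Import Order.TTheory GRing.Theory Num.Theory.
Local Open Scope classical_set_scope.
Local Open Scope ring_scope.

Definition std_gaussian d (T : measurableType d) (R : realType)
  (P : probability T R) (X : {RV P >-> R}) : Prop :=
  forall A : set R, measurable A -> distribution P X A = normal_prob 0 1 A.

(* Mutual independence of a finite family of real random variables:
   for every choice of Borel sets B_i, the joint probability factorizes.
   (Taking B_i = setT for unused indices gives the product rule on every
   subfamily.) *)
Definition mutually_independent d (T : measurableType d) (R : realType)
  (P : probability T R) (n : nat) (X : 'I_n -> {RV P >-> R}) : Prop :=
  forall B : 'I_n -> set R, (forall i, measurable (B i)) ->
    P (\bigcap_(i in [set: 'I_n]) (X i @^-1` B i))
    = (\prod_(i < n) P (X i @^-1` B i))%E.

(* Non-increasing rearrangement of (|v_0|, ..., |v_{n-1}|), indexed from 1: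
   nonincr_abs_rearr v m is the m-th largest of the |v_i| (1 <= m <= n). *)
Definition nonincr_abs_rearr (R : realType) (n : nat) (v : 'I_n -> R) (m : nat) : R :=
  nth 0 (sort (fun x y : R => y <= x) [seq `|v i| | i <- enum 'I_n]) m.-1.

(* Main.v *)
Require Import Defs.
From HB Require Import structures.
From mathcomp Require Import all_boot all_order all_algebra.
From mathcomp Require Import all_classical all_reals all_analysis.
Import Order.TTheory GRing.Theory Num.Theory.
Local Open Scope classical_set_scope.
Local Open Scope ring_scope.

From mathcomp Require Import measurable_realfun.
From mathcomp Require Import ring lra zify.
Import numFieldNormedType.Exports.

Section tail.
Context {R : realType}.
Notation mu := (@lebesgue_measure R).

Let c : R := normal_peak 1.
Let phi := normal_pdf (0:R) 1.

Lemma phiE y : phi y = c * expR (- (y ^+ 2) / 2).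
Proof.
rewrite /phi /normal_pdf oner_eq0 /normal_fun subr0 expr1n.
by rewrite /c; congr (_ * expR _); rewrite mulNr.
Qed.

Lemma cont_phi : continuous phi.
Proof. exact: continuous_normal_pdf (oner_neq0 R). Qed.

Lemma phi_ge0 y : 0 <= phi y.
Proof. exact: normal_pdf_ge0. Qed.

Lemma phiN y : phi (- y) = phi y.
Proof. by rewrite !phiE sqrrN. Qed.

Lemma c_gt0 : 0 < c.
Proof. exact: normal_peak_gt0 (oner_neq0 R). Qed.

Lemma dF (k y : R) : is_derive y 1 (fun y => k * expR (- (y ^+ 2) / 2)) (k * (expR (- (y ^+ 2) / 2) * (- y))).
Proof.
have h1 : is_derive y 1 (fun y : R => - (y ^+ 2) / 2) (- y).
  apply: is_derive_eq.
  rewrite !scaler0 add0r. change (2^-1 * - (y * 1 + y * 1) = - y). lra.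
have h2 : is_derive y 1 (expR \o (fun y : R => - (y ^+ 2) / 2)) (expR (- (y ^+ 2) / 2) * (- y)).
  exact: is_derive1_comp.
by apply: is_derive_eq.
Qed.

Lemma cvg_gauss2 : expR (- (y ^+ 2) / 2) @[y --> +oo] --> (0:R).
Proof.
have -> : (fun y : R => expR (- (y ^+ 2) / 2)) = (fun z => expR (- z)) \o (fun y : R => y ^+ 2 / 2).
  by apply/funext => y /=; rewrite mulNr.
apply: (@cvg_comp _ _ _ _ _ _ (pinfty_nbhs R)); last exact: cvgr_expR.
apply/cvgryPge => A.
near=> y.
have y1 : 1 <= y by near: y; exact: nbhs_pinfty_ge (num_real _).
have yA : 2 * A <= y by near: y; exact: nbhs_pinfty_ge (num_real _).
nra.
Unshelve. all: by end_near. Qed.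

Lemma cont_g (x : R) : continuous (fun y : R => y / x * phi y).
Proof.
move=> y.
apply: (@continuousM _ R^o (fun y => y / x) phi); last exact: cont_phi.
apply: (@continuousM _ R^o id (fun=> x^-1)); first exact: (fun z => z).
exact: cst_continuous.
Qed.

Lemma int_g (x : R) : 0 < x ->
  (\int[mu]_(y in `[x, +oo[) (y / x * phi y)%:E = (c / x * expR (- (x ^+ 2) / 2))%:E)%E.
Proof.
move=> x0.
rewrite (@ge0_continuous_FTC2y _ _ (fun y => - (c / x) * expR (- (y ^+ 2) / 2)) _ 0).
- by rewrite -EFinB sub0r mulNr opprK.
- by move=> y xy; rewrite mulr_ge0 ?phi_ge0 // divr_ge0 // (le_trans (ltW x0)).
- exact: continuous_subspaceT (cont_g x).
- rewrite -(mulr0 (- (c / x))); apply: cvgMr; exact: cvg_gauss2.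
- by move=> y _; apply: ex_derive; exact: dF.
- apply: cvg_at_right_filter.
  have D : derivable (fun y : R => - (c / x) * expR (- (y ^+ 2) / 2)) x 1.
    by apply: ex_derive; exact: dF.
  exact: (differentiable_continuous (proj1 (derivable1_diffP _ _) D)).
- move=> y _; rewrite derive1E (@derive_val _ _ _ _ _ _ _ (dF _ _)) phiE.
  have x0' : x != 0 by rewrite gt_eqF.
  by field.
Qed.


Lemma normal_tail (x : R) : 0 < x ->
  (normal_prob 0 1 [set y : R | (x <= `|y|)%R]
   <= (2 * expR (- (x ^+ 2) / 2) / (Num.sqrt (2 * pi) * x))%:E)%E.
Proof.
move=> x0.
have AE : [set y : R | x <= `|y|] = `]-oo, (- x)] `|` `[x, +oo[.
  apply/seteqP; split => y /=.
  - rewrite ler_normr => /orP[xy|xy]; [right|left]; rewrite /= in_itv /= ?andbT //.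
    by rewrite lerNr.
  - case => /=; rewrite in_itv/= ?andbT => h; rewrite ler_normr; apply/orP; [right|left]; lra.
have mphi : measurable_fun setT (EFin \o phi).
  by apply/measurable_EFinP; exact: measurable_normal_pdf.
rewrite /normal_prob AE ge0_integral_setU //=; last 3 first.
- exact: measurable_funTS.
- by move=> y _; rewrite lee_fin; exact: normal_pdf_ge0.
- by apply/disj_setPS => y [] /=; rewrite !in_itv/= ?andbT => h1 h2; lra.
rewrite (@ge0_integration_by_substitutionNy _ phi x); last 2 first.
- exact: continuous_subspaceT cont_phi.
- by move=> y _; exact: phi_ge0.
rewrite [X in (X + _)%E](_ : _ = (\int[mu]_(y in `[x, +oo[) (phi y)%:E)%E); last first.
  by apply: eq_integral => y _; rewrite /= phiN.
have HI : (\int[mu]_(y in `[x, +oo[) (phi y)%:E <= (c / x * expR (- (x ^+ 2) / 2))%:E)%E.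
  rewrite -int_g //; apply: ge0_le_integral => //.
  - by move=> y _; rewrite lee_fin phi_ge0.
  - exact: measurable_funTS.
  - apply/measurable_EFinP; apply: measurable_funTS.
    exact: continuous_measurable_fun (cont_g x).
  - move=> y /=; rewrite in_itv /= andbT => xy; rewrite lee_fin.
    rewrite -subr_ge0 -[X in _ - X]mul1r -mulrBl mulr_ge0 ?phi_ge0 // subr_ge0.
    by rewrite ler_pdivlMr // mul1r.
have cE : c = (Num.sqrt (2 * pi))^-1.
  by rewrite /c /normal_peak expr1n mul1r -mulr_natl.
have sp : 0 < Num.sqrt (2 * pi : R).
  by rewrite sqrtr_gt0 mulr_gt0 // pi_gt0.
have -> : 2 * expR (- (x ^+ 2) / 2) / (Num.sqrt (2 * pi) * x)
        = c / x * expR (- (x ^+ 2) / 2) + c / x * expR (- (x ^+ 2) / 2).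
  rewrite cE; field.
  by rewrite !gt_eqF.
by rewrite EFinD; apply: leeD.
Qed.

End tail.

Lemma card_count n (P : pred 'I_n) : #|[pred i | P i]| = count P (enum 'I_n).
Proof.
by rewrite enumT cardE /enum_mem size_filter; apply: eq_count => i.
Qed.

Lemma rearr_iff (R : realType) n (v : 'I_n -> R) (a : R) m : (0 < m)%N -> (m <= n)%N ->
  (a <= nonincr_abs_rearr v m) <->
  exists S : {set 'I_n}, #|S| = m /\ forall i, i \in S -> a <= `|v i|.
Proof.
move=> m0 mn.
rewrite /nonincr_abs_rearr.
set s := sort _ _.
have ss : sorted (fun x y : R => y <= x) s.
  by apply: sort_sorted => x y; exact: le_total.
have sz : size s = n by rewrite size_sort size_map size_enum_ord.
have cnt : count (fun y => a <= y) s = #|[pred i : 'I_n | a <= `|v i|]|.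
  have /permP -> : perm_eq s [seq `|v i| | i <- enum 'I_n] by rewrite perm_sort.
  by rewrite count_map card_count.
have key : forall i j, (i < n)%N -> (j < n)%N -> (i <= j)%N -> nth 0 s j <= nth 0 s i.
  move=> i j ilt jlt ij.
  have tr : transitive (fun x y : R => y <= x).
    by move=> x y z /= h1 h2; exact: le_trans h2 h1.
  have rf : reflexive (fun x y : R => y <= x) by move=> x /=.
  by apply: (sorted_leq_nth tr rf 0 ss) => //; rewrite -topredE /= sz.
split.
- move=> h.
  have : (m <= count (fun y : R => (a <= y)%R) s)%N.
    rewrite -(cat_take_drop m s) count_cat.
    have -> : count (fun y => a <= y) (take m s) = m.
      have hall : all (fun y => a <= y) (take m s).
        apply/(all_nthP 0) => i; rewrite size_takel ?sz // => im.
        rewrite nth_take //.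
        apply: le_trans h _; apply: key => //.
        - clear -im mn; lia.
        - clear -m0 mn; lia.
        - clear -im m0; lia.
      move: hall; rewrite all_count => /eqP ->.
      by rewrite size_takel ?sz.
    exact: leq_addr.
  rewrite cnt => /card_geqP [s' [us sz' sub]].
  exists [set x in s']; split.
  + by rewrite cardsE (card_uniqP us).
  + by move=> i; rewrite inE => /sub.
- case=> S [cS hS].
  have : (m <= count (fun y : R => (a <= y)%R) s)%N.
    rewrite cnt -cS; have sub : S \subset [pred i : 'I_n | a <= `|v i|] by apply/fintype.subsetP => i iS; rewrite inE; exact: hS.
    exact: subset_leq_card sub.
  rewrite leNgt; apply: contraTN => lt.
  rewrite -ltnNge -(cat_take_drop m.-1 s) count_cat.
  have -> : count (fun y => a <= y) (drop m.-1 s) = 0%N.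
    apply/eqP; rewrite -leqn0 leqNgt -has_count; apply/hasPn => y /(nthP 0) [i].
    rewrite size_drop sz => ilt <-.
    rewrite nth_drop -ltNge; apply: le_lt_trans lt.
    apply: key; first by rewrite prednK // ltnS.
    + by rewrite -ltn_subRL.
    + exact: leq_addr.
  rewrite addn0; apply: leq_ltn_trans (count_size _ _) _.
  by rewrite size_takel ?sz ?prednK // (leq_trans (leq_pred _)).
Qed.

Lemma ffact_le_exp (n m : nat) : (n ^_ m <= n ^ m)%N.
Proof.
elim: m n => [|m IH] n; first by [].
rewrite ffactnS expnS leq_mul //; apply: leq_trans (IH _) _.
case: m {IH} => [|m]; first by rewrite !expn0.
by rewrite leq_exp2r // leq_pred.
Qed.

Lemma binom_bound (R : realType) (j k : nat) : (k <= j)%N ->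
  ('C(2 ^ j, 2 ^ k))%:R <= (2 ^+ (j - k) : R) ^+ (2 ^ k) * expR ((2 ^ k)%:R) :> R.
Proof.
move=> kj.
set m := (2 ^ k)%N.
have m0 : (0 < m)%N by rewrite expn_gt0.
have Hf : 0 < (m`!)%:R :> R by rewrite ltr0n fact_gt0.
have h1 : ('C(2 ^ j, m) * m`!)%:R <= ((2 ^ (j - k)) ^ m * m ^ m)%:R :> R.
  rewrite ler_nat bin_ffact -expnMn -expnD subnK //.
  exact: ffact_le_exp.
have h2 : (m%:R ^+ m) <= expR (m%:R) * (m`!)%:R :> R.
  have := @expR_ge1Dxn R (m%:R) m.-1 (ler0n _ _).
  rewrite prednK // => h.
  rewrite -ler_pdivrMr //.
  by apply: le_trans h; rewrite -subr_ge0 addrK.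
rewrite -(ler_pM2r Hf) -natrM (le_trans h1) //.
rewrite natrM -mulrA.
have -> : (((2 ^ (j - k)) ^ m)%:R : R) = 2 ^+ (j - k) ^+ m by rewrite !natrX.
rewrite ler_pM2l ?exprn_gt0 //.
by rewrite [X in X <= _]natrX.
Qed.

Lemma absge_eq (R : realType) (x : R) : 0 < x ->
  [set y : R | (x <= `|y|)%R] = `]-oo, (- x)] `|` `[x, +oo[.
Proof.
move=> x0; apply/seteqP; split => y /=.
- rewrite ler_normr => /orP[xy|xy]; [right|left]; rewrite /= in_itv /= ?andbT //.
  by rewrite lerNr.
- case => /=; rewrite in_itv/= ?andbT => h; rewrite ler_normr; apply/orP; [right|left]; lra.
Qed.

Lemma absge_measurable (R : realType) (x : R) : 0 < x ->
  measurable [set y : R | (x <= `|y|)%R].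
Proof. by move=> x0; rewrite absge_eq //; apply: measurableU. Qed.

Lemma part2 (d : measure_display) (T : measurableType d) (R : realType)
     (P : probability T R) (j k : nat) : (k < j)%N ->
     forall xi : 'I_(2 ^ j) -> {RV P >-> R},
       mutually_independent xi ->
       (forall i, std_gaussian (xi i)) ->
       forall K : R, 1 <= K ->
         (P [set t | (K * Num.sqrt ((j - k)%:R)
                      <= nonincr_abs_rearr (fun i => xi i t) (2 ^ k))%R]
          <= ((2 * expR (- (K ^+ 2) / 2)) ^+ ((j - k) * 2 ^ k)
              * expR ((2 ^ k)%:R))%:E)%E.
Proof.
move=> kj xi ind gauss K K1.
set m := (2 ^ k)%N.
have m0 : (0 < m)%N by rewrite expn_gt0.
have mn : (m <= 2 ^ j)%N by rewrite leq_exp2l // ltnW.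
set a := K * Num.sqrt ((j - k)%:R).
have jk1 : 1 <= (j - k)%:R :> R by rewrite ler1n subn_gt0.
have s1 : 1 <= Num.sqrt ((j - k)%:R : R).
  have h1 : 0 <= Num.sqrt ((j - k)%:R : R) by exact: sqrtr_ge0.
  have h2 : Num.sqrt ((j - k)%:R : R) ^+ 2 = (j - k)%:R by rewrite sqr_sqrtr // ler0n.
  nra.
have a1 : 1 <= a by rewrite -[1]mulr1 ler_pM.
have a0 : 0 < a by apply: lt_le_trans a1.
have a2 : a ^+ 2 = K ^+ 2 * (j - k)%:R.
  by rewrite exprMn sqr_sqrtr // ler0n.
set A0 := [set y : R | (a <= `|y|)%R].
have mA0 : measurable A0 by exact: absge_measurable.
set b := expR (- (a ^+ 2) / 2).
have b0 : 0 <= b by exact: expR_ge0.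
have pb : (normal_prob 0 1 A0 <= b%:E)%E.
  apply: le_trans (@normal_tail R a a0) _; rewrite lee_fin.
  have sp : 2 <= Num.sqrt (2 * pi : R).
    have h1 : 0 <= Num.sqrt (2 * pi : R) by exact: sqrtr_ge0.
    have h2 : Num.sqrt (2 * pi : R) ^+ 2 = 2 * pi by rewrite sqr_sqrtr // mulr_ge0 // pi_ge0.
    have hp := @pi_ge2 R; set s := Num.sqrt _ in h1 h2 *.
    by rewrite -(@ler_pXn2r _ 2%N) ?nnegrE // h2 expr2 ler_pM2l.
  rewrite ler_pdivrMr; last by rewrite mulr_gt0 // (lt_le_trans _ sp).
  have hsa : 2 <= Num.sqrt (2 * pi : R) * a by nra.
  by rewrite -/b [X in X <= _]mulrC; apply: ler_wpM2l.
have p0 : (0 <= normal_prob 0 1 A0)%E by exact: measure_ge0.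
have pfin : normal_prob 0 1 A0 \is a fin_num.
  by rewrite ge0_fin_numE // (le_lt_trans pb) // ltry.
set q := fine (normal_prob 0 1 A0).
have qE : normal_prob 0 1 A0 = q%:E by rewrite fineK.
have q0 : 0 <= q by rewrite -lee_fin -qE.
have qb : q <= b by rewrite -lee_fin -qE.
have Pi i : P (xi i @^-1` A0) = q%:E by rewrite -qE; exact: (gauss i A0 mA0).
set L := enum [set S : {set 'I_(2 ^ j)} | #|S| == m]%SET.
pose BS (S : {set 'I_(2 ^ j)}) (i : 'I_(2 ^ j)) : set R := if i \in S then A0 else setT.
pose F (l : nat) := \bigcap_(i in [set: 'I_(2 ^ j)]) (xi i @^-1` BS (nth finset.set0 L l) i).
have mBS S i : measurable (BS S i) by rewrite /BS; case: ifP.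
have mF l : measurable (F l).
  apply: fin_bigcap_measurable; first exact: finite_finset.
  by move=> i _; exact: measurable_funPTI.
have cL l : (l < size L)%N -> #|nth finset.set0 L l| = m.
  by move=> lL; have := mem_nth finset.set0 lL; rewrite mem_enum inE => /eqP.
have PF l : (l < size L)%N -> P (F l) = (q ^+ m)%:E.
  move=> lL; rewrite /F ind //.
  rewrite (eq_bigr (fun i => (if i \in nth finset.set0 L l then q else 1)%:E)); last first.
    move=> i _; rewrite /BS; case: ifP => _; first exact: Pi.
    by rewrite preimage_setT probability_setT.
  by rewrite prodEFin -big_mkcond /= prodr_const cL.
have EU : [set t | (a <= nonincr_abs_rearr (fun i => xi i t) m)%R]
          = \big[setU/set0]_(l < size L) F l.
  rewrite -bigcup_mkord; apply/seteqP; split => t /=.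
  - move/(@rearr_iff R _ (fun i => xi i t) a m m0 mn) => [S [cS hS]].
    have SL : S \in L.
      by rewrite mem_enum inE cS eqxx.
    exists (index S L); first by rewrite /= index_mem.
    rewrite /F nth_index // => i _ /=; rewrite /BS; case: ifP => iS //; exact: hS.
  - case=> l /= lL Ft; apply/(@rearr_iff R _ (fun i => xi i t) a m m0 mn).
    exists (nth finset.set0 L l); split; first exact: cL.
    by move=> i iS; have := Ft i I; rewrite /BS iS.
rewrite EU.
apply: (le_trans (@content_subadditive _ _ _ P _ F (size L) (fun l _ => mF l) _ _)).
- by apply: bigsetU_measurable => l _; exact: mF.
- by [].
rewrite (eq_bigr (fun _ => (q ^+ m)%:E)); last by move=> l _; exact: PF.
rewrite sumEFin sumr_const card_ord lee_fin.
rewrite /L -cardE card_draws card_ord -[X in X <= _]mulr_natl.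
apply: (@le_trans _ _ ('C(2 ^ j, m)%:R * b ^+ m)).
  by apply: ler_wpM2l => //; apply: lerXn2r; rewrite ?nnegrE.
have bE : b = expR (- (K ^+ 2) / 2) ^+ (j - k).
  by rewrite /b -expRM_natl a2; congr expR; ring.
rewrite bE exprM exprMn exprMn.
have hB := @binom_bound R j k (ltnW kj).
have hE : 0 <= expR (- K ^+ 2 / 2) ^+ (j - k) ^+ m by rewrite !exprn_ge0 ?expR_ge0.
set E := expR (- K ^+ 2 / 2) ^+ (j - k) ^+ m in hE *.
set C := ('C(_, _))%:R in hB *.
set X := expR _ in hB *.
set A := (2 ^+ (j - k)) ^+ _ in hB *.
nra.
Qed.

Theorem lemma4p3 :
  (* (i) Gaussian tail bound *)
  (forall (d : measure_display) (T : measurableType d) (R : realType)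
     (P : probability T R) (w : {RV P >-> R}),
     std_gaussian w ->
     forall x : R, 0 < x ->
       (P [set t | (x <= `|w t|)%R]
        <= (2 * expR (- (x ^+ 2) / 2) / (Num.sqrt (2 * pi) * x))%:E)%E)
  /\
  (* (ii) tail bound for the 2^k-th largest of 2^j i.i.d. |N(0,1)| *)
  (forall (d : measure_display) (T : measurableType d) (R : realType)
     (P : probability T R) (j k : nat), (k < j)%N ->
     forall xi : 'I_(2 ^ j) -> {RV P >-> R},
       mutually_independent xi ->
       (forall i, std_gaussian (xi i)) ->
       forall K : R, 1 <= K ->
         (P [set t | (K * Num.sqrt ((j - k)%:R)
                      <= nonincr_abs_rearr (fun i => xi i t) (2 ^ k))%R]
          <= ((2 * expR (- (K ^+ 2) / 2)) ^+ ((j - k) * 2 ^ k)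
              * expR ((2 ^ k)%:R))%:E)%E).
Proof.
split.
- move=> d T R P w gw x x0.
  have -> : P [set t | (x <= `|w t|)%R] = normal_prob 0 1 [set y : R | (x <= `|y|)%R].
    exact: (gw _ (@absge_measurable R x x0)).
  exact: normal_tail.
- exact: part2.
Qed.
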